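(* Let $T_n$ be the transitive tournament on $n$ vertices. Its characteristic polynomial is $$\phi(T_n,t)=\det(tI-H(T_n))=\sum_{j=0}^{\lfloor n/2\rfloor}(-1)^j\binom{n}{2j}t^{n-2j}=\tfrac12(t+i)^n+\tfrac12(t-i)^n.$$ The eigenvalues of $H(T_n)$ (as a multiset) are $\sum_{k=1}^{(n-1)/2} 2\sin\frac{k(2j+1)\pi}{n}$, $j=0,\dots,n-1$, when $n$ is odd, and $(-1)^j+\sum_{k=1}^{(n-2)/2}2\sin\frac{k(2j+1)\pi}{n}$, $j=0,\dots,n-1$, when $n$ is even.
   Context: The transitive tournament $T_n$ has vertices $1,\dots,n$ and an arc $uv$ for every $u<v$. For a digraph $X$, the Hermitian adjacency matrix $H(X)$ has $(u,v)$-entry $1$ if $uv$ and $vu$ are arcs, $i$ if only $uv$ is an arc, $-i$ if only $vu$ is an arc, and $0$ otherwise. *)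

(* Defs.v *)
From HB Require Import structures.
From mathcomp Require Import all_boot all_order all_algebra.
From mathcomp Require Import complex.
From mathcomp Require Import reals trigo.
Set Implicit Arguments. Unset Strict Implicit. Unset Printing Implicit Defensive.
Import Order.TTheory GRing.Theory Num.Theory.
Local Open Scope ring_scope.

Definition hermAdj (R : rcfType) (n : nat) (arc : rel 'I_n) : 'M[R[i]]_n :=
  \matrix_(u, v)
    if arc u v && arc v u then 1
    else if arc u v then 'i%C
    else if arc v u then - 'i%C
    else 0.

(* Transitive tournament T_n: vertices 0..n-1 (i.e. 1..n shifted),
   arc uv iff u < v. *)
Definition transTour (n : nat) : rel 'I_n := fun u v => (u < v)%N.

Definition tourEig (R : realType) (n j : nat) : R :=
  if odd n then
    \sum_(1 <= k < ((n - 1)./2).+1) 2 * sin ((k * (2 * j + 1))%:R * pi / n%:R)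
  else
    (-1) ^+ j + \sum_(1 <= k < ((n - 2)./2).+1)
                   2 * sin ((k * (2 * j + 1))%:R * pi / n%:R).

Arguments transTour n : clear implicits.
Arguments tourEig R n j : clear implicits.

(* Main.v *)
Require Import Defs.
From HB Require Import structures.
From mathcomp Require Import all_boot all_order all_algebra.
From mathcomp Require Import complex.
From mathcomp Require Import reals trigo.
From mathcomp Require Import ring zify.
Import Order.TTheory GRing.Theory Num.Theory.
Local Open Scope ring_scope.

Section Aux.
Set Implicit Arguments. Unset Strict Implicit.


Section Tri.
Variable R : comNzRingType.
Variables x a b : R.

Definition tri n : 'M[R]_n :=
  \matrix_(i, j) if i == j then x else if (i < j)%N then a else b.

Lemma det_uptri n (c d : R) :
  \det (\matrix_(i < n, j < n) if i == j then c else if (i < j)%N then d else 0)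
  = c ^+ n.
Proof.
rewrite -det_tr det_trig.
  rewrite (eq_bigr (fun=> c)) ?prodr_const ?card_ord // => i _.
  by rewrite !mxE eqxx.
apply/is_trig_mxP => i j ltij; rewrite !mxE.
have -> : (j == i) = false by apply/negbTE; rewrite -val_eqE /= neq_ltn ltij orbT.
by rewrite ltnNge (ltnW ltij).
Qed.

Lemma signnn n : (-1) ^+ (n + n) = 1 :> R.
Proof. by rewrite addnn -mul2n mulnC exprM sqrr_sign. Qed.

Lemma liftmaxF n (i : 'I_n) : (lift ord_max i == ord_max) = false.
Proof. by apply/negbTE; rewrite eq_sym neq_lift. Qed.

Lemma lmax n (i : 'I_n) : (lift ord_max i : nat) = i.
Proof. by rewrite /= /bump leqNgt ltn_ord. Qed.

Lemma det_tri_rec n :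
  \det (tri n.+1) = a * (x - b) ^+ n + (x - a) * \det (tri n).
Proof.
pose B : 'M[R]_n.+1 := \matrix_(i, j) if j == ord_max then a else tri n.+1 i j.
pose C : 'M[R]_n.+1 := \matrix_(i, j) if j == ord_max then (i == ord_max)%:R
   else tri n.+1 i j.
have H1 : \det (tri n.+1) = 1 * \det B^T + (x - a) * \det C^T.
  rewrite -[LHS]det_tr.
  apply: (determinant_multilinear (i0 := ord_max)).
  - apply/rowP => j; rewrite !mxE.
    rewrite eqxx; have [ej|nj] := eqVneq j ord_max.
      by rewrite mulr1; ring.
    have -> : (j < n)%N = true.
      by rewrite ltn_neqAle -ltnS ltn_ord andbT; apply: contra nj => /eqP e; apply/eqP/val_inj.
    by rewrite mulr0 addr0 mul1r.
  - by apply/matrixP => i j; rewrite !mxE liftmaxF.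
  - by apply/matrixP => i j; rewrite !mxE liftmaxF.
rewrite H1 !det_tr mul1r; congr (_ + _).
  pose E : 'M[R]_n.+1 := \matrix_(i, j) ((i == j)%:R - ((i != ord_max) && (j == ord_max))%:R).
  pose B' : 'M[R]_n.+1 := \matrix_(i, j) (if i == ord_max then B i j else B i j - B ord_max j).
  have EB : E *m B = B'.
    apply/matrixP => i j; rewrite !mxE.
    under eq_bigr do rewrite !mxE mulrBl.
    rewrite sumrB (bigD1 i) //= eqxx mul1r big1 ?addr0; last first.
      by move=> k /negbTE; rewrite eq_sym => ->; rewrite mul0r.
    rewrite (bigD1 ord_max) //= big1 ?addr0; last first.
      by move=> k /negbTE ->; rewrite andbF mul0r.
    rewrite eqxx andbT.
    by have [->|ni] := eqVneq i ord_max; rewrite /= ?mul0r ?subr0 ?mul1r.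
  have detE : \det E = 1.
    rewrite -det_tr det_trig.
      rewrite big1 // => i _; rewrite !mxE eqxx /=.
      by rewrite andNb subr0.
    apply/is_trig_mxP => i j ltij; rewrite !mxE.
    have -> : (j == i) = false by apply/negbTE; rewrite -val_eqE /= neq_ltn ltij orbT.
    have -> : (i == ord_max) = false.
      by apply/negbTE; rewrite -val_eqE /= neq_ltn (leq_trans ltij) // -ltnS.
    by rewrite andbF subr0.
  have -> : \det B = \det B' by rewrite -EB det_mulmx detE mul1r.
  rewrite (expand_det_col _ ord_max) (bigD1 ord_max) //= big1 ?addr0; last first.
    by move=> i /negbTE ni; rewrite !mxE ni eqxx subrr mul0r.
  rewrite !mxE !eqxx /cofactor signnn mul1r; congr (_ * _).
  rewrite -(det_uptri n (x - b) (a - b)); congr (\det _).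
  apply/matrixP => i j; rewrite !mxE !liftmaxF (inj_eq (@lift_inj _ _)) (eq_sym ord_max) liftmaxF.
  rewrite !lmax; have -> : ((ord_max : 'I_n.+1) < j)%N = false.
    by apply/negbTE; rewrite -leqNgt /= (ltnW (ltn_ord j)).
  have [_|_] := eqVneq i j => //.
  by case: ltnP => _; rewrite ?subrr.
rewrite (expand_det_col _ ord_max) (bigD1 ord_max) //= big1 ?addr0; last first.
  by move=> i /negbTE ni; rewrite !mxE ni eqxx mul0r.
rewrite !mxE !eqxx /cofactor signnn !mul1r; congr (_ * \det _).
apply/matrixP => i j; rewrite !mxE !liftmaxF.
by rewrite (inj_eq (@lift_inj _ _)) !lmax.
Qed.
End Tri.

Lemma det_tri_closed (R : comNzRingType) (x c h : R) : h * 2 = 1 -> forall n,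
  \det (tri x (- c) c n) = h * (x + c) ^+ n + h * (x - c) ^+ n.
Proof.
move=> hh; elim=> [|n IH]; first by rewrite det_mx00 !expr0 !mulr1 -mulr2n -mulr_natr.
rewrite det_tri_rec IH !exprS opprK.
transitivity (h * ((x + c) * (x + c) ^+ n) + h * ((x - c) * (x - c) ^+ n)
   + c * (x - c) ^+ n * (h * 2 - 1)); first by ring.
by rewrite hh subrr mulr0 addr0.
Qed.

Lemma charT (R : rcfType) n :
  char_poly (hermAdj R (transTour n)) =
  \det (tri 'X (- ('i%C)%:P) (('i%C)%:P) n).
Proof.
rewrite /char_poly /char_poly_mx; congr (\det _); apply/matrixP => i j.
rewrite !mxE /transTour.
have [->|nij] := eqVneq i j; first by rewrite ltnn /= mulr1n subr0.
rewrite mulr0n sub0r.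
case: ltngtP => //= h; last by move: nij; rewrite -val_eqE /= h eqxx.
  by rewrite polyCN opprK.
Qed.



Lemma even_sum_aux (V : zmodType) (F : nat -> V) :
  (forall k, odd k -> F k = 0) -> forall m,
  \sum_(0 <= k < m.*2.+1) F k = \sum_(0 <= j < m.+1) F (2 * j)%N /\
  \sum_(0 <= k < m.*2.+2) F k = \sum_(0 <= j < m.+1) F (2 * j)%N.
Proof.
move=> Fo; elim=> [|m [IH1 IH2]].
  by rewrite /= !big_nat1 big_nat_recr //= big_nat1 (Fo 1%N) // addr0.
have E1 : \sum_(0 <= k < (m.+1).*2.+1) F k = \sum_(0 <= j < m.+2) F (2 * j)%N.
  rewrite doubleS big_nat_recr //= IH2 [in RHS]big_nat_recr //=.
  by rewrite mul2n doubleS.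
split => //.
by rewrite big_nat_recr //= E1 Fo ?addr0 //= odd_double.
Qed.

Lemma even_sum (V : zmodType) (F : nat -> V) n :
  (forall k, odd k -> F k = 0) ->
  \sum_(k < n.+1) F k = \sum_(j < n./2.+1) F (2 * j)%N.
Proof.
move=> Fo; rewrite -(big_mkord xpredT F) -(big_mkord xpredT (fun j => F (2 * j)%N)).
have [H1 H2] := even_sum_aux Fo n./2.
rewrite -{1}(odd_double_half n); case: (odd n) => /=.
  by rewrite add1n H2.
by rewrite add0n H1.
Qed.

Lemma binom_form (F : fieldType) (c : F) n : c ^+ 2 = -1 -> (2 : F) != 0 ->
  2^-1 *: ('X + c%:P) ^+ n + 2^-1 *: ('X - c%:P) ^+ n =
  \sum_(j < n./2.+1) (((-1) ^+ j * ('C(n, 2 * j))%:R) *: 'X^(n - 2 * j)).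
Proof.
move=> c2 n2.
rewrite -polyCN !exprDn !scaler_sumr -big_split /=.
rewrite (eq_bigr (fun k : 'I_n.+1 =>
   ((2^-1 * (c ^+ k + (- c) ^+ k)) * ('C(n, k))%:R) *: 'X^(n - k))); last first.
  move=> k _; rewrite -!polyC_exp -!mul_polyC.
  rewrite !polyCM !polyCD !polyC_natr.
  ring.
rewrite (@even_sum _ (fun k => ((2^-1 * (c ^+ k + (- c) ^+ k)) * ('C(n, k))%:R) *: 'X^(n - k)) n).
  apply: eq_bigr => j _; congr (_ *: _); congr (_ * _).
  rewrite !exprM sqrrN c2.
  by field.
move=> k ok; rewrite exprNn -signr_odd ok expr1 mulN1r subrr mulr0 mul0r.
by rewrite scale0r.
Qed.


Section Trig.
Variable R : realType.

Lemma sin_sum (y : R) m :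
  (\sum_(1 <= k < m.+1) 2 * sin (k%:R * (y * 2))) * sin y
  = cos y - cos ((2 * m + 1)%:R * y).
Proof.
elim: m => [|m IH].
  by rewrite big_geq // mul0r mul1r subrr.
rewrite big_nat_recr //= mulrDl IH.
have -> : (2 * m + 1)%:R * y = m.+1%:R * (y * 2) - y.
  by rewrite natrD natrM; ring.
have -> : (2 * m.+1 + 1)%:R * y = m.+1%:R * (y * 2) + y.
  by rewrite natrD natrM; ring.
rewrite cosB cosD; ring.
Qed.

Lemma cos_sin_half j :
  cos ((2 * j + 1)%:R * pi / 2 : R) = 0 /\
  sin ((2 * j + 1)%:R * pi / 2 : R) = (-1) ^+ j.
Proof.
elim: j => [|j [IH1 IH2]].
  by rewrite mul1r cos_pihalf sin_pihalf expr0.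
have -> : (2 * j.+1 + 1)%:R * pi / 2 = (2 * j + 1)%:R * pi / 2 + pi :> R.
  by rewrite !natrD !natrM; field.
by rewrite cosDpi sinDpi IH1 IH2 oppr0 exprS mulN1r.
Qed.

Definition alpha n j : R := (2 * j + 1)%:R * pi / (2 * n)%:R.

Lemma eig_sin n j : (0 < n)%N -> tourEig R n j * sin (alpha n j) = cos (alpha n j).
Proof.
move=> n0.
have nz : (n%:R : R) != 0 by rewrite pnatr_eq0 -lt0n.
set y := alpha n j.
have sumE m : \sum_(1 <= k < m.+1) 2 * sin ((k * (2 * j + 1))%:R * pi / n%:R)
    = \sum_(1 <= k < m.+1) 2 * sin (k%:R * (y * 2)) :> R.
  apply: eq_big_nat => k _; congr (2 * sin _).
  by rewrite /y /alpha !natrM natrD; field.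
have nalpha : n%:R * y = (2 * j + 1)%:R * pi / 2.
  by rewrite /y /alpha natrM; field.
have [C0 S0] := cos_sin_half j.
have hd := odd_double_half n.
rewrite /tourEig; case: ifP => on.
  rewrite sumE sin_sum.
  have -> : (2 * (n - 1)./2 + 1)%N = n.
    by move: hd; rewrite on; move: (n./2) => h; lia.
  by rewrite nalpha C0 subr0.
rewrite mulrDl sumE sin_sum.
have e : (2 * (n - 2)./2 + 1).+1 = n.
  by move: hd; rewrite on add0n; move: (n./2) => h; lia.
have -> : ((2 * (n - 2)./2 + 1)%:R : R) = n%:R - 1.
  by rewrite -[in RHS]e mulrSr addrK.
rewrite mulrBl mul1r nalpha cosB C0 S0; ring.
Qed.

Lemma frac_pi m N : (0 < m)%N -> (m < N)%N -> (0 : R) < (m%:R * pi / N%:R : R) < pi.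
Proof.
move=> m0 mN; have pi0 : (0 : R) < pi := pi_gt0 R.
have N0 : (0 : R) < N%:R by rewrite ltr0n (leq_ltn_trans _ mN).
apply/andP; split.
  by rewrite divr_gt0 // mulr_gt0 // ltr0n.
by rewrite ltr_pdivrMr // mulrC ltr_pM2l // ltr_nat.
Qed.

Lemma sin_alpha_gt0 n j : (j < n)%N -> 0 < sin (alpha n j).
Proof.
move=> jn; apply: sin_gt0_pi; apply: frac_pi;
lia.
Qed.

Lemma eig_inj n j k : (j < n)%N -> (k < n)%N -> tourEig R n j = tourEig R n k -> j = k.
Proof.
move=> jn kn e.
have n0 : (0 < n)%N by lia.
have key a b : (a < b)%N -> (b < n)%N -> tourEig R n a = tourEig R n b -> False.
  move=> ab bn eab.
  have Ha := @eig_sin n a n0; have Hb := @eig_sin n b n0.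
  rewrite eab in Ha.
  have h0 : sin (alpha n b - alpha n a) = 0.
    by rewrite sinB -Ha -Hb; ring.
  have h1 : 0 < sin (alpha n b - alpha n a).
    apply: sin_gt0_pi.
    have -> : alpha n b - alpha n a = (2 * (b - a))%:R * pi / (2 * n)%:R.
      have E : (2 * b + 1)%N = (2 * (b - a) + (2 * a + 1))%N by lia.
      by rewrite /alpha E natrD; ring.
    apply: frac_pi; lia.
  by rewrite h0 ltxx in h1.
case: (ltngtP j k) => [jk|kj|//]; exfalso.
  exact: key jk kn e.
exact: key kj jn (esym e).
Qed.

Definition ex (t : R) : R[i] := (cos t)%:C%C + 'i%C * (sin t)%:C%C.

Lemma ii : 'i%C * 'i%C = -1 :> R[i].
Proof. by rewrite -expr2 sqr_i. Qed.

Lemma exD a b : ex a * ex b = ex (a + b).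
Proof.
rewrite /ex cosD sinD rmorphB rmorphD !rmorphM.
set ca := (cos a)%:C%C; set cb := (cos b)%:C%C.
set sa := (sin a)%:C%C; set sb := (sin b)%:C%C.
transitivity (ca * cb - sa * sb + 'i%C * (sa * cb + ca * sb) + sa * sb * ('i%C * 'i%C + 1)).
  by ring.
by rewrite ii addNr mulr0 addr0.
Qed.

Lemma exX a n : ex a ^+ n = ex (n%:R * a).
Proof.
elim: n => [|n IH]; first by rewrite expr0 mul0r /ex cos0 sin0 rmorph0 rmorph1 mulr0 addr0.
by rewrite exprS IH exD mulrS mulrDl mul1r.
Qed.

Lemma root_eig n j : (j < n)%N ->
  ((tourEig R n j)%:C%C + 'i%C) ^+ n + ((tourEig R n j)%:C%C - 'i%C) ^+ n = 0.
Proof.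
move=> jn.
have n0 : (0 < n)%N by lia.
set l := tourEig R n j; set y := alpha n j.
have sp := sin_alpha_gt0 jn.
have H : l * sin y = cos y := @eig_sin n j n0.
have s0 : (sin y)%:C%C != 0 :> R[i].
  by rewrite -(rmorph0 (real_complex R)) (inj_eq (@complexI _)) gt_eqF.
apply: (mulIf (expf_neq0 n s0)); rewrite mul0r mulrDl -!exprMn.
have e1 : (l%:C%C + 'i%C) * (sin y)%:C%C = ex y.
  by rewrite /ex mulrDl -rmorphM H.
have e2 : (l%:C%C - 'i%C) * (sin y)%:C%C = ex (- y).
  by rewrite /ex cosN sinN rmorphN mulrBl -rmorphM H mulrN.
have cn : cos (n%:R * y) = 0.
  have nz : (n%:R : R) != 0 by rewrite pnatr_eq0 -lt0n.
  have -> : n%:R * y = (2 * j + 1)%:R * pi / 2.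
    by rewrite /y /alpha natrM; field.
  exact: (cos_sin_half j).1.
rewrite e1 e2 !exX /ex mulrN cosN sinN rmorphN cn rmorph0.
by rewrite mulrN !add0r subrr.
Qed.

End Trig.

Lemma eq_prod_of_roots (F : fieldType) (p : {poly F}) (rs : seq F) :
  p \is monic -> size p = (size rs).+1 -> all (root p) rs -> uniq rs ->
  p = \prod_(z <- rs) ('X - z%:P).
Proof.
move=> pm sp allr ur.
have ur' : uniq_roots rs by rewrite uniq_rootsE.
have [q pq] := uniq_roots_prod_XsubC allr ur'.
have Pm : \prod_(z <- rs) ('X - z%:P) \is monic := monic_prod_XsubC rs xpredT id.
have q0 : q != 0.
  by apply: contraTneq pm => q0; rewrite pq q0 mul0r monicE lead_coef0 eq_sym oner_eq0.
have sq : size q = 1%N.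
  move: sp; rewrite pq size_Mmonic // size_prod_XsubC addnS /=.
  by move=> h; apply/eqP; rewrite -(eqn_add2r (size rs)) h add1n.
have lq : lead_coef q = 1.
  by move/monicP: pm; rewrite pq lead_coef_Mmonic.
have qC := size1_polyC (eq_leq sq).
rewrite qC lead_coefC in lq.
by rewrite pq qC lq mul1r.
Qed.
End Aux.

Theorem theorem10p5 (R : realType) (n : nat) :
  let phi := char_poly (hermAdj R (transTour n)) : {poly R[i]} in
  [/\ phi = \sum_(j < n./2.+1) (((-1) ^+ j * ('C(n, 2 * j))%:R) *: 'X^(n - 2 * j)),
      phi = 2^-1 *: (('X + ('i%C)%:P) ^+ n) + 2^-1 *: (('X - ('i%C)%:P) ^+ n)
    & phi = \prod_(j < n) ('X - ((tourEig R n j)%:C%C)%:P)].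
Proof.
move=> phi.
have two0 : (2 : R[i]) != 0 by rewrite pnatr_eq0.
have H2 : phi = 2^-1 *: (('X + ('i%C)%:P) ^+ n) + 2^-1 *: (('X - ('i%C)%:P) ^+ n).
  rewrite /phi charT (@det_tri_closed _ 'X ('i%C)%:P (2^-1)%:P).
    by rewrite !mul_polyC.
  by rewrite -(polyC_natr _ 2) -polyCM mulVf.
split => //.
  by rewrite H2 binom_form // sqr_i.
pose f j := (tourEig R n j)%:C%C.
have -> : \prod_(j < n) ('X - ((tourEig R n j)%:C%C)%:P) =
          \prod_(z <- map f (index_iota 0 n)) ('X - z%:P).
  by rewrite big_map big_mkord.
apply: eq_prod_of_roots.
- exact: char_poly_monic.
- by rewrite size_char_poly size_map size_iota subn0.
- apply/allP => z /mapP [j]; rewrite mem_index_iota => /andP [_ jn] ->.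
  rewrite /root H2 !hornerE -mulrDr.
  by rewrite root_eig // mulr0.
- rewrite map_inj_in_uniq ?iota_uniq // => j k.
  rewrite !mem_index_iota => /andP [_ jn] /andP [_ kn] /complexI.
  exact: eig_inj.
Qed.
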